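(* Let $y$ be an optimal (minimum-cost feasible) solution, $S$ an active set for $y$, and $i\in S$. If $y_i<x_i$, then any two distinct $j,j'\in\widetilde\gamma(i)$ with $y_j>x_i$ and $y_{j'}>x_i$ do not overlap, i.e. $|y_j-y_{j'}|\ge r_j+r_{j'}$. Symmetrically, if $y_i>x_i$, then any two distinct $j,j'\in\widetilde\gamma(i)$ with $y_j<x_i$ and $y_{j'}<x_i$ satisfy $|y_j-y_{j'}|\ge r_j+r_{j'}$.
   Context: Barrier coverage problem: sensors $i=1,\dots,n$ with locations $x_i\in\mathbb{R}$ and radii $r_i>0$, indexed so that $x_1\le\cdots\le x_n$; a solution $y\in\mathbb{R}^n$ places sensor $i$ to cover $[y_i-r_i,y_i+r_i]$; it is feasible if these intervals cover $[0,L]$; its cost is $\sum_i|y_i-x_i|$; an optimal solution is a feasible solution of minimum cost. A set $S$ is active for $y$ if $\bigcup_{i\in S}[y_i-r_i,y_i+r_i]\supseteq[0,L]$. For $i\in S$, $\gamma(i)$ is the set of $j\in S$ with ($i<j$ and $y_i>y_j$) or ($i>j$ and $y_i<y_j$); and $\widetilde\gamma(i)=\{j\in\gamma(i): |x_j-y_j|\le|x_i-y_i|\}$. *)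

(* Defs.v *)
(* real numbers. Sensors are indexed by 0..n-1 (paper: 1..n). *)
From Stdlib Require Import Reals.
Open Scope R_scope.

Definition sorted_locs (n : nat) (x : nat -> R) : Prop :=
  forall i j : nat, (i <= j)%nat -> (j < n)%nat -> x i <= x j.

Definition covers (n : nat) (r : nat -> R) (L : R) (S : nat -> Prop) (y : nat -> R) : Prop :=
  forall p : R, 0 <= p <= L ->
    exists i : nat, (i < n)%nat /\ S i /\ y i - r i <= p <= y i + r i.

Definition all_sensors (i : nat) : Prop := True.

Definition feasible (n : nat) (r : nat -> R) (L : R) (y : nat -> R) : Prop :=
  covers n r L all_sensors y.

Fixpoint cost (n : nat) (x y : nat -> R) : R :=
  match n with
  | O => 0
  | S m => cost m x y + Rabs (y m - x m)
  end.

Definition optimal (n : nat) (x r : nat -> R) (L : R) (y : nat -> R) : Prop :=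
  feasible n r L y /\
  forall z : nat -> R, feasible n r L z -> cost n x y <= cost n x z.

Definition active (n : nat) (r : nat -> R) (L : R) (S : nat -> Prop) (y : nat -> R) : Prop :=
  covers n r L S y.

Definition gamma (n : nat) (S : nat -> Prop) (y : nat -> R) (i j : nat) : Prop :=
  (j < n)%nat /\ S j /\
  (((i < j)%nat /\ y i > y j) \/ ((j < i)%nat /\ y i < y j)).

Definition gamma_t (n : nat) (x : nat -> R) (S : nat -> Prop) (y : nat -> R) (i j : nat) : Prop :=
  gamma n S y i j /\ Rabs (x j - y j) <= Rabs (x i - y i).

(* Main.v *)
Require Import Defs.
From Stdlib Require Import Reals Lra Lia.
Open Scope R_scope.

Definition upd (y : nat -> R) (a : nat) (v : R) : nat -> R :=
  fun k => if Nat.eq_dec k a then v else y k.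

Lemma cost_upd_lo (x y : nat -> R) a v m : (m <= a)%nat ->
  cost m x (upd y a v) = cost m x y.
Proof.
  induction m; intros H; simpl; [reflexivity|].
  rewrite IHm by lia. unfold upd. destruct (Nat.eq_dec m a); [lia|reflexivity].
Qed.

Lemma cost_upd (x y : nat -> R) a v m : (a < m)%nat ->
  cost m x (upd y a v) = cost m x y - Rabs (y a - x a) + Rabs (v - x a).
Proof.
  induction m; intros H; [lia|]. simpl.
  destruct (Nat.eq_dec m a) as [->|Hne].
  - rewrite cost_upd_lo by lia. unfold upd at 1.
    destruct (Nat.eq_dec a a); [lra|congruence].
  - rewrite IHm by lia. unfold upd at 1.
    destruct (Nat.eq_dec m a); [congruence|lra].
Qed.

Lemma no_overlap_L n x r L y a b :
  optimal n x r L y -> (a < n)%nat -> (b < n)%nat -> a <> b ->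
  Rabs (y a - y b) < r a + r b -> y a + r a <= y b + r b -> y a > x a -> False.
Proof.
  intros [Hf Hmin] Ha Hb Hab Hov Hle Hx.
  assert (Hov' : y b - r b < y a + r a).
  { destruct (Rabs_def2 _ _ Hov). lra. }
  set (e := Rmin (y a - x a) (y a + r a - (y b - r b))).
  assert (He : 0 < e).
  { unfold e, Rmin; destruct Rle_dec; lra. }
  assert (He1 : e <= y a - x a) by apply Rmin_l.
  assert (He2 : e <= y a + r a - (y b - r b)) by apply Rmin_r.
  assert (Hfz : feasible n r L (upd y a (y a - e))).
  { intros p Hp. destruct (Hf p Hp) as [k [Hk [_ Hc]]].
    destruct (Nat.eq_dec k a) as [->|Hne].
    - destruct (Rle_dec p (y a + r a - e)).
      + exists a. split; [exact Ha|split; [exact I|]].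
        unfold upd; destruct (Nat.eq_dec a a); [lra|congruence].
      + exists b. split; [exact Hb|split; [exact I|]].
        unfold upd; destruct (Nat.eq_dec b a); [congruence|lra].
    - exists k. split; [exact Hk|split; [exact I|]].
      unfold upd; destruct (Nat.eq_dec k a); [congruence|exact Hc]. }
  specialize (Hmin _ Hfz). rewrite cost_upd in Hmin by exact Ha.
  rewrite (Rabs_right (y a - x a)) in Hmin by lra.
  rewrite (Rabs_right (y a - e - x a)) in Hmin by lra. lra.
Qed.

Lemma no_overlap_R n x r L y a b :
  optimal n x r L y -> (a < n)%nat -> (b < n)%nat -> a <> b ->
  Rabs (y a - y b) < r a + r b -> y b - r b <= y a - r a -> y a < x a -> False.
Proof.
  intros [Hf Hmin] Ha Hb Hab Hov Hle Hx.
  assert (Hov' : y a - r a < y b + r b).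
  { destruct (Rabs_def2 _ _ Hov). lra. }
  set (e := Rmin (x a - y a) (y b + r b - (y a - r a))).
  assert (He : 0 < e).
  { unfold e, Rmin; destruct Rle_dec; lra. }
  assert (He1 : e <= x a - y a) by apply Rmin_l.
  assert (He2 : e <= y b + r b - (y a - r a)) by apply Rmin_r.
  assert (Hfz : feasible n r L (upd y a (y a + e))).
  { intros p Hp. destruct (Hf p Hp) as [k [Hk [_ Hc]]].
    destruct (Nat.eq_dec k a) as [->|Hne].
    - destruct (Rle_dec (y a - r a + e) p).
      + exists a. split; [exact Ha|split; [exact I|]].
        unfold upd; destruct (Nat.eq_dec a a); [lra|congruence].
      + exists b. split; [exact Hb|split; [exact I|]].
        unfold upd; destruct (Nat.eq_dec b a); [congruence|lra].
    - exists k. split; [exact Hk|split; [exact I|]].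
      unfold upd; destruct (Nat.eq_dec k a); [congruence|exact Hc]. }
  specialize (Hmin _ Hfz). rewrite cost_upd in Hmin by exact Ha.
  rewrite (Rabs_left (y a - x a)) in Hmin by lra.
  rewrite (Rabs_left1 (y a + e - x a)) in Hmin by lra. lra.
Qed.

Theorem mainTheorem6 (n : nat) (x r : nat -> R) (L : R) (y : nat -> R)
  (S : nat -> Prop) (i : nat)
  (Hsorted : sorted_locs n x)
  (Hr : forall k : nat, (k < n)%nat -> 0 < r k)
  (Hopt : optimal n x r L y)
  (Hact : active n r L S y)
  (Hi : (i < n)%nat) (HiS : S i) :
  (y i < x i ->
     forall j j' : nat, j <> j' ->
       gamma_t n x S y i j -> gamma_t n x S y i j' ->
       y j > x i -> y j' > x i ->
       Rabs (y j - y j') >= r j + r j')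
  /\
  (y i > x i ->
     forall j j' : nat, j <> j' ->
       gamma_t n x S y i j -> gamma_t n x S y i j' ->
       y j < x i -> y j' < x i ->
       Rabs (y j - y j') >= r j + r j').
Proof.
  split.
  - intros Hyi j j' Hjj' [[Hj [_ Hg]] _] [[Hj' [_ Hg']] _] Hyj Hyj'.
    assert (xj : x j <= x i).
    { destruct Hg as [[_ ?]|[? _]]; [lra|apply Hsorted; lia]. }
    assert (xj' : x j' <= x i).
    { destruct Hg' as [[_ ?]|[? _]]; [lra|apply Hsorted; lia]. }
    apply Rnot_lt_ge; intro Hov.
    destruct (Rle_dec (y j + r j) (y j' + r j')).
    + eapply (no_overlap_L n x r L y j j'); eauto; lra.
    + eapply (no_overlap_L n x r L y j' j); eauto.
      * rewrite Rabs_minus_sym; lra.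
      * lra.
      * lra.
  - intros Hyi j j' Hjj' [[Hj [_ Hg]] _] [[Hj' [_ Hg']] _] Hyj Hyj'.
    assert (xj : x i <= x j).
    { destruct Hg as [[? _]|[_ ?]]; [apply Hsorted; lia|lra]. }
    assert (xj' : x i <= x j').
    { destruct Hg' as [[? _]|[_ ?]]; [apply Hsorted; lia|lra]. }
    apply Rnot_lt_ge; intro Hov.
    destruct (Rle_dec (y j' - r j') (y j - r j)).
    + eapply (no_overlap_R n x r L y j j'); eauto; lra.
    + eapply (no_overlap_R n x r L y j' j); eauto.
      * rewrite Rabs_minus_sym; lra.
      * lra.
      * lra.
Qed.
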